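(* For $(x,y)\in\mathbb{Z}^2$ let $\epsilon=\epsilon(x,y)$ be $1/2$ if $x$ and $y$ are both odd and $0$ otherwise, so that $(x,y,\epsilon+m)\in H(\mathbb{Z})$ for all $m\in\mathbb{Z}$. Then the word length $|(x,y,\epsilon+m)|_{\sf std}$ is a nondecreasing function of $m\in\{0,1,2,\dots\}$.
   Context: $H(\mathbb{Z})$ is written in exponential coordinates: the group law is $(x,y,z)(x',y',z')=(x+x',y+y',z+z'+\tfrac12(xy'-yx'))$ and $H(\mathbb{Z})=\{(x,y,z):x,y\in\mathbb{Z},z\in\mathbb{Z}+\epsilon(x,y)\}$. $|\cdot|_{\sf std}$ is word length with respect to ${\sf std}=\{\pm{\sf e}_1,\pm{\sf e}_2\}$, ${\sf e}_1=(1,0,0)$, ${\sf e}_2=(0,1,0)$. *)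

(* Defs.v *)
From Stdlib Require Import ClassicalEpsilon.
From mathcomp Require Import all_boot all_order all_algebra.
Set Implicit Arguments. Unset Strict Implicit. Unset Printing Implicit Defensive.
Import Order.TTheory GRing.Theory Num.Theory.
Local Open Scope ring_scope.

(* Real Heisenberg group in exponential coordinates, restricted to the
   ambient set Z x Z x Q (which contains H(Z)). *)
Definition heis := (int * int * rat)%type.

Definition hmul (g h : heis) : heis :=
  let: (x, y, z) := g in
  let: (x', y', z') := h in
  (x + x', y + y', z + z' + (x%:~R * y'%:~R - y%:~R * x'%:~R) / 2%:R).

Definition hone : heis := (0, 0, 0).

Inductive std_gen := E1 | E1inv | E2 | E2inv.

Definition gen_val (s : std_gen) : heis :=
  match s with
  | E1 => (1, 0, 0)
  | E1inv => (-1, 0, 0)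
  | E2 => (0, 1, 0)
  | E2inv => (0, -1, 0)
  end.

Definition word_eval (w : seq std_gen) : heis :=
  foldr (fun s acc => hmul (gen_val s) acc) hone w.

Definition is_word_length (g : heis) (n : nat) : Prop :=
  (exists w, size w = n /\ word_eval w = g) /\
  (forall w, word_eval w = g -> (n <= size w)%N).

Definition word_length (g : heis) : nat :=
  epsilon (inhabits 0%N) (fun n => is_word_length g n).

Definition eps (x y : int) : rat :=
  if odd `|x|%N && odd `|y|%N then 2%:R^-1 else 0.

(* Main.v *)
Require Import Defs.
From Stdlib Require Import Classical ClassicalEpsilon.
From mathcomp Require Import all_boot all_order all_algebra.
From mathcomp Require Import ring lra zify.
Import Order.TTheory GRing.Theory Num.Theory.
Local Open Scope ring_scope.

Lemma two_neq0 : (2%:R : rat) != 0. Proof. by []. Qed.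

Lemma hmulA g h k : hmul (hmul g h) k = hmul g (hmul h k).
Proof.
move: g h k => [[x y] z] [[x' y'] z'] [[x'' y''] z'']; rewrite /hmul.
congr (_,_,_); rewrite ?addrA // !rmorphD /=. field; by [].
Qed.

Lemma hmul1g g : hmul hone g = g.
Proof. move: g => [[x y] z]; rewrite /hmul /hone /=; congr (_,_,_); rewrite ?add0r //; ring. Qed.

Lemma eval_cons s w : word_eval (s :: w) = hmul (gen_val s) (word_eval w).
Proof. by []. Qed.

Lemma eval_cat u v : word_eval (u ++ v) = hmul (word_eval u) (word_eval v).
Proof.
elim: u => [|s u IH]; first by rewrite cat0s hmul1g.
by rewrite cat_cons !eval_cons IH hmulA.
Qed.

Lemma hmul_shift g p a :
  hmul g (p, a) = ((hmul g (p, 0)).1, (hmul g (p, 0)).2 + a).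
Proof.
move: g p => [[x y] z] [x' y']; rewrite /hmul /=; congr pair; ring.
Qed.

Definition gx (s : std_gen) : int := (gen_val s).1.1.
Definition gy (s : std_gen) : int := (gen_val s).1.2.
Lemma gen_valE s : gen_val s = ((gx s, gy s), 0).
Proof. by case: s. Qed.

Definition Conn (w1 w2 : seq std_gen) : Prop :=
  size w1 = size w2 /\ (word_eval w1).1 = (word_eval w2).1 /\
  exists d : int, (word_eval w2).2 = (word_eval w1).2 + d%:~R /\
   forall k : int, ((0 <= k /\ k <= d) \/ (d <= k /\ k <= 0)) ->
     exists w', size w' = size w1 /\
       word_eval w' = ((word_eval w1).1, (word_eval w1).2 + k%:~R).

Lemma Conn_refl w : Conn w w.
Proof.
split=> //; split=> //; exists 0; split; first by rewrite addr0.
move=> k Hk; have -> : k = 0 by lia.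
exists w; split=> //; rewrite addr0; by case: (word_eval w).
Qed.

Lemma Conn_trans w1 w2 w3 : Conn w1 w2 -> Conn w2 w3 -> Conn w1 w3.
Proof.
move=> [s12 [p12 [d1 [a12 H1]]]] [s23 [p23 [d2 [a23 H2]]]].
split; first by rewrite s12.
split; first by rewrite p12.
exists (d1 + d2); split; first by rewrite a23 a12 rmorphD /= addrA.
move=> k Hk.
have [Hk1|Hk2] : ((0 <= k /\ k <= d1) \/ (d1 <= k /\ k <= 0)) \/
   ((0 <= k - d1 /\ k - d1 <= d2) \/ (d2 <= k - d1 /\ k - d1 <= 0)) by lia.
  exact: H1.
have [w' [sw' ew']] := H2 _ Hk2.
exists w'; split; first by rewrite sw' s12.
rewrite ew' -p12 a12 -addrA; congr (_, _ + _).
rewrite rmorphB /=; ring.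
Qed.

Lemma Conn_cons s w1 w2 : Conn w1 w2 -> Conn (s :: w1) (s :: w2).
Proof.
move=> [s12 [p12 [d [a12 H]]]].
split; first by rewrite /= s12.
rewrite !eval_cons.
move: p12 a12 H; case: (word_eval w1) => p a1; case: (word_eval w2) => p2 a2 /=.
move=> <- -> H.
split; first by rewrite (hmul_shift _ _ a1) (hmul_shift _ _ (a1 + _)).
exists d; split.
  by rewrite (hmul_shift _ _ a1) (hmul_shift _ _ (a1 + _)) /= addrA.
move=> k /H [w' [sw' ew']]; exists (s :: w'); split; first by rewrite /= sw'.
rewrite eval_cons ew' (hmul_shift _ _ a1) (hmul_shift _ _ (a1 + _)) /= addrA //.
Qed.

Lemma Conn_swap s a r : Conn (s :: a :: r) (a :: s :: r).
Proof.
split=> //.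
move Er: (word_eval r) => [[X Y] z].
have E : forall u v, word_eval (u :: v :: r) =
  ((gx u + (gx v + X), gy u + (gy v + Y)),
   z + ((gx v)%:~R * Y%:~R - (gy v)%:~R * X%:~R) / 2%:R
   + ((gx u)%:~R * ((gy v)%:~R + Y%:~R) - (gy u)%:~R * ((gx v)%:~R + X%:~R)) / 2%:R).
  move=> u v; rewrite !eval_cons !gen_valE Er.
  rewrite /hmul /= !rmorphD /=; congr (_,_,_); ring.
split; first by rewrite !E /=; congr pair; ring.
have Hd : (-1 <= gy s * gx a - gx s * gy a <= 1)%R by case: s; case: a.
exists (gy s * gx a - gx s * gy a); split.
  rewrite !E /= !rmorphB !rmorphM /=; field; by [].
move=> k Hk.
have [->|->] : k = 0 \/ k = gy s * gx a - gx s * gy a by move: Hd => /andP[]; lia.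
  exists (s :: a :: r); split=> //; rewrite addr0; by case: (word_eval _).
exists (a :: s :: r); split=> //.
rewrite !E /=; congr (_,_,_); try ring.
rewrite !rmorphB !rmorphM /=; field; by [].
Qed.

Arguments Conn_trans {w1 w2 w3}.
Lemma Conn_move s u v : Conn (s :: (u ++ v)) (u ++ s :: v).
Proof.
elim: u => [|a u IH]; first exact: Conn_refl.
apply: (Conn_trans (Conn_swap _ _ _)).
rewrite cat_cons; exact: Conn_cons.
Qed.

Definition CP (P : pred std_gen) (w : seq std_gen) :=
  filter P w ++ filter (predC P) w.

Lemma Conn_CP P w : Conn w (CP P w).
Proof.
elim: w => [|s w IH]; first exact: Conn_refl.
apply: (Conn_trans (Conn_cons s _ _ IH)).
rewrite /CP /=; case: (P s) => /=; first exact: Conn_refl.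
exact: Conn_move.
Qed.

Definition isY (s : std_gen) : bool := match s with E2 | E2inv => true | _ => false end.
Definition isX (s : std_gen) : bool := match s with E1 | E1inv => true | _ => false end.

Lemma evalY u : all isY u -> (word_eval u).1.1 = 0 /\ (word_eval u).2 = 0.
Proof.
elim: u => [|s u IH] //= /andP[Hs Hu]; have := IH Hu.
case: (word_eval u) => [[X Y] z] /= [-> ->].
by case: s Hs => //= _; rewrite /hmul /=; split; rewrite ?add0r //; ring.
Qed.

Lemma evalX u : all isX u -> (word_eval u).1.2 = 0 /\ (word_eval u).2 = 0.
Proof.
elim: u => [|s u IH] //= /andP[Hs Hu]; have := IH Hu.
case: (word_eval u) => [[X Y] z] /= [-> ->].
by case: s Hs => //= _; rewrite /hmul /=; split; rewrite ?add0r //; ring.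
Qed.

Lemma predCY u : all (predC isY) u -> all isX u.
Proof. by elim: u => [|s u IH] //= /andP[]; case: s => //= _ /IH. Qed.
Lemma predCX u : all (predC isX) u -> all isY u.
Proof. by elim: u => [|s u IH] //= /andP[]; case: s => //= _ /IH. Qed.

Lemma eval_YX u v : all isY u -> all isX v ->
  word_eval (u ++ v) = (((word_eval v).1.1, (word_eval u).1.2),
     - ((word_eval u).1.2%:~R * (word_eval v).1.1%:~R) / 2%:R).
Proof.
move=> /evalY [] + + /evalX []; rewrite eval_cat.
case: (word_eval u) => [[X Y] z]; case: (word_eval v) => [[X' Y'] z'] /= -> -> -> ->.
rewrite /hmul /=; congr (_,_,_); rewrite ?add0r ?addr0 //; ring.
Qed.

Lemma eval_XY u v : all isX u -> all isY v ->
  word_eval (u ++ v) = (((word_eval u).1.1, (word_eval v).1.2),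
     ((word_eval u).1.1%:~R * (word_eval v).1.2%:~R) / 2%:R).
Proof.
move=> /evalX [] + + /evalY []; rewrite eval_cat.
case: (word_eval u) => [[X Y] z]; case: (word_eval v) => [[X' Y'] z'] /= -> -> -> ->.
rewrite /hmul /=; congr (_,_,_); rewrite ?add0r ?addr0 //; ring.
Qed.



Lemma eval_nseq s n : isX s || isY s -> word_eval (nseq n s) =
  (((n%:Z * gx s)%R, (n%:Z * gy s)%R), 0).
Proof.
move=> Hs; have H0 : gx s * gy s = 0 by case: s Hs.
elim: n => [|n IH]; first by rewrite /= !mul0r.
have -> : nseq n.+1 s = s :: nseq n s by [].
rewrite eval_cons IH gen_valE /hmul /=.
congr (_,_,_); try by rewrite intS mulrDl mul1r.
rewrite !rmorphM /=; field; by [].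
Qed.

Definition xword (x : int) := if (0 <= x)%R then nseq `|x| E1 else nseq `|x| E1inv.
Definition yword (y : int) := if (0 <= y)%R then nseq `|y| E2 else nseq `|y| E2inv.

Lemma absz_ge0 (x : int) : (0 <= x)%R -> (`|x|%N)%:Z = x.
Proof. by move=> H; rewrite abszE ger0_norm. Qed.
Lemma absz_lt0 (x : int) : ~~ (0 <= x)%R -> - ((`|x|%N)%:Z) = x.
Proof. by rewrite -ltNge => H; rewrite abszE ltr0_norm // opprK. Qed.

Lemma eval_xword x : word_eval (xword x) = ((x, 0), 0).
Proof.
rewrite /xword; case: ifP => H; rewrite eval_nseq //= ?mulr1 ?mulr0.
  by rewrite absz_ge0.
by rewrite mulrN1 absz_lt0 ?H.
Qed.
Lemma eval_yword y : word_eval (yword y) = ((0, y), 0).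
Proof.
rewrite /yword; case: ifP => H; rewrite eval_nseq //= ?mulr1 ?mulr0.
  by rewrite absz_ge0.
by rewrite mulrN1 absz_lt0 ?H.
Qed.

Definition cw := [:: E1; E2; E1inv; E2inv].
Lemma eval_cw w : word_eval (cw ++ w) = ((word_eval w).1, (word_eval w).2 + 1).
Proof.
rewrite eval_cat; case: (word_eval w) => [[X Y] z].
rewrite /cw /word_eval /= /hmul /=; congr (_,_,_); rewrite ?add0r ?addr0 //=; try lia.
rewrite !rmorphD /=; field; by [].
Qed.

Lemma eval_iter j b : word_eval (iter j (cat cw) b) =
  ((word_eval b).1, (word_eval b).2 + j%:R).
Proof.
elim: j => [|j IH]; first by rewrite /= addr0; case: (word_eval b).
by rewrite iterS eval_cw IH /= -addrA -natr1.
Qed.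

Lemma intM_abs (x y : int) : (x%:~R * y%:~R : rat) =
  if (0 <= x * y)%R then (`|x|%N * `|y|%N)%:R else - (`|x|%N * `|y|%N)%:R.
Proof.
rewrite -rmorphM /= -abszM; case: ifP => H.
  by rewrite -[in LHS](absz_ge0 _ H).
by rewrite -[in LHS](absz_lt0 _ (negbT H)) rmorphN.
Qed.

Lemma eps_ge0 x y : 0 <= eps x y.
Proof. by rewrite /eps; case: ifP. Qed.

Definition base (x y : int) :=
  if (0 <= x * y)%R then yword y ++ xword x else xword x ++ yword y.

Lemma eval_base x y : word_eval (base x y) =
  ((x, y), - (`|x|%N * `|y|%N)%:R / 2%:R).
Proof.
rewrite /base; have := intM_abs x y; case: ifP => H E;
  rewrite eval_cat eval_xword eval_yword /hmul /=; congr (_,_,_); rewrite ?add0r ?addr0 //.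
  by rewrite [y%:~R * _]mulrC E.
by rewrite E.
Qed.

Lemma exists_word x y (m : nat) : exists w, word_eval w = (x, y, eps x y + m%:R).
Proof.
set N := (`|x|%N * `|y|%N)%N.
have HN : (odd N + (N./2).*2)%N = N by rewrite odd_double_half.
exists (iter (m + (odd N + N./2))%N (cat cw) (base x y)).
rewrite eval_iter eval_base /=; congr (_,_,_).
rewrite -/N /eps -oddM -/N.
have HNr : (N%:R : rat) = (odd N)%:R + (N./2)%:R * 2%:R by rewrite -natrM -natrD muln2 HN.
rewrite HNr; case: (odd N) => /=; rewrite !natrD; field; by [].
Qed.

Lemma wl_spec g : (exists w, word_eval w = g) -> is_word_length g (word_length g).
Proof.
move=> [w Hw]; apply: epsilon_spec.
suff: forall n, (exists w, size w = n /\ word_eval w = g) ->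
    exists n0, is_word_length g n0 by apply; exists w.
elim/ltn_ind => n IH [w0 [s0 e0]].
case: (classic (exists w', word_eval w' = g /\ (size w' < n)%N)).
  by move=> [w' [e' l']]; apply: (IH (size w') l'); exists w'.
move=> Hno; exists n; split; first by exists w0.
move=> w' e'; rewrite leqNgt; apply/negP => l'; apply: Hno; by exists w'.
Qed.

Lemma natzR (n : nat) : ((n%:Z)%:~R : rat) = n%:R. Proof. by []. Qed.

Theorem mainTheorem18 (x y : int) (m m' : nat) :
  (m <= m')%N ->
  (word_length (x, y, (eps x y + m%:R)%R) <= word_length (x, y, (eps x y + m'%:R)%R))%N.
Proof.
move=> Hmm.
have [[w [sw ew]] _] := wl_spec _ (exists_word x y m').
have [_ Hmin] := wl_spec _ (exists_word x y m).
rewrite -sw.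
set N := (`|x|%N * `|y|%N)%N.
have [P HC] : exists P, word_eval (CP P w) = ((x, y), - N%:R / 2%:R).
  case: (boolP (0 <= x * y)%R) => Hxy.
    exists isY; have [_ [pe _]] := Conn_CP isY w.
    rewrite /CP eval_YX ?filter_all ?predCY ?filter_all //.
    move: pe; rewrite /CP eval_YX ?filter_all ?predCY ?filter_all // ew /= => -[<- <-].
    have := intM_abs x y; rewrite Hxy => E.
    by rewrite [y%:~R * _]mulrC E.
  exists isX; have [_ [pe _]] := Conn_CP isX w.
  rewrite /CP eval_XY ?filter_all ?predCX ?filter_all //.
  move: pe; rewrite /CP eval_XY ?filter_all ?predCX ?filter_all // ew /= => -[<- <-].
  have := intM_abs x y; rewrite (negbTE Hxy) => E.
  by rewrite E.
have [_ [_ [d [ad H]]]] := Conn_CP P w.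
rewrite HC ew /= in ad.
have [|w' [sw' ew']] := H (m%:Z - m'%:Z).
  right; split; last by lia.
  rewrite -(ler_int rat) rmorphB /= !natzR.
  have Hd : (d%:~R : rat) = - N%:R / 2%:R - eps x y - m'%:R by rewrite ad; ring.
  rewrite Hd.
  have := eps_ge0 x y; have : 0 <= (N%:R : rat) by [].
  have : 0 <= (m%:R : rat) by [].
  move=> H0 H1 H2; lra.
rewrite -sw'; apply: Hmin.
rewrite ew' ew /= rmorphB /= !natzR; congr (_,_,_); ring.
Qed.
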